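(* Let $f:\mathbb{R}^n\to\mathbb{R}$ and $c:\mathbb{R}^n\to\mathbb{R}^m$ ($m<n$) be smooth, with $g=\nabla f$ and Jacobian $J=\nabla c$. Suppose noisy evaluations satisfy, for all $x$, $|\tilde f(x)-f(x)|\le\epsilon_f$, $\|\tilde c(x)-c(x)\|_1\le\epsilon_c$, $\|\tilde g(x)-g(x)\|\le\epsilon_g$, $\|\tilde J(x)-J(x)\|_{1,2}\le\epsilon_J$. Let $\{x_k\}$ be a sequence with $\sigma_{\min}(J_k)\ge\gamma>\epsilon_J$ for all $k$; set $\delta=1/(\gamma-\epsilon_J)$, $\eta=1/\gamma$. For $\beta_k>0$ let $d_k$ solve $\min_d\tfrac12\beta_k\|d\|^2+\tilde g_k^Td$ s.t. $\tilde c_k+\tilde J_kd=0$; fix $\tau\in(0,1)$ and suppose $\pi_k\ge\frac{1}{1-\tau}\|(\tilde J_k\tilde J_k^T)^{-1}\tilde J_k\tilde g_k\|_\infty$ for every $k$. Define, for $x\in\mathbb{R}^n$, $\beta>0$, $\pi>0$, $$E(x,\beta,\pi)=\frac{1}{\beta}\big(\|g(x)\|^2\eta\epsilon_J+\epsilon_g\|g(x)\|\big)+\epsilon_g\delta(\|c(x)\|_1+\epsilon_c)+\pi\Big[(2-\tau)\epsilon_c+\epsilon_J\Big(\delta(\|c(x)\|_1+\epsilon_c)+\frac{1}{\beta}\big(\|P(x)g(x)\|+\|g(x)\|\eta\epsilon_J+\epsilon_g\big)\Big)\Big].$$ Choose any $\theta_1\in[0,1)$. For any $x_k$ such that $$(1-\theta_1)\Big(\frac{1}{\beta_k}g_k^TP_kg_k+\tau\pi_k\|c_k\|_1\Big)\ge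 E(x_k,\beta_k,\pi_k),$$ we have $$\ell(x_k;d_k)\le-\theta_1\Big(\frac{1}{\beta_k}g_k^TP_kg_k+\tau\pi_k\|c_k\|_1\Big),$$ where $\ell(x_k;d_k)=g_k^Td_k+\pi_k\|c_k+J_kd_k\|_1-\pi_k\|c_k\|_1$.
   Context: $\|\cdot\|$ is the Euclidean norm; $\|A\|_{1,2}=\sup_{x\ne0}\|Ax\|_1/\|x\|$; $\sigma_{\min}$ is the smallest singular value. Subscript $k$ denotes evaluation at $x_k$. $P(x)=I-J(x)^T(J(x)J(x)^T)^{-1}J(x)$ and $P_k=P(x_k)$. *)

(* Defs.v *)
From HB Require Import structures.
From mathcomp Require Import all_boot all_order all_algebra.
From mathcomp Require Import all_classical all_reals all_analysis.

Set Implicit Arguments.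
Unset Strict Implicit.
Unset Printing Implicit Defensive.

Import Order.TTheory GRing.Theory Num.Theory.
Local Open Scope ring_scope.
Local Open Scope classical_set_scope.

Section Defs.
Variable R : realType.

Definition norm2 {n : nat} (v : 'cV[R]_n) : R := Num.sqrt (\sum_i (v i 0) ^+ 2).
Definition norm1 {n : nat} (v : 'cV[R]_n) : R := \sum_i `|v i 0|.
Definition normInf {n : nat} (v : 'cV[R]_n) : R := \big[Num.max/0]_i `|v i 0|.
Definition dotv {n : nat} (u v : 'cV[R]_n) : R := (u^T *m v) 0 0.

Definition opnorm12 {m n : nat} (A : 'M[R]_(m, n)) : R :=
  sup [set norm1 (A *m x) / norm2 x | x in [set x : 'cV[R]_n | x != 0]].

(* smallest singular value of an m x n matrix A with m <= n (full-row-rank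
   setting): sigma_min(A) = min_{||y|| = 1} ||A^T y|| *)
Definition sigma_min {m n : nat} (A : 'M[R]_(m, n)) : R :=
  inf [set norm2 (A^T *m y) | y in [set y : 'cV[R]_m | norm2 y = 1]].

Definition projP {m n : nat} (J : 'M[R]_(m, n)) : 'M[R]_n :=
  1%:M - J^T *m invmx (J *m J^T) *m J.

Definition Eterm {m n : nat} (eps_c eps_g eps_J delta eta tau : R)
  (gx : 'cV[R]_n) (cx : 'cV[R]_m) (Jx : 'M[R]_(m, n)) (beta pi : R) : R :=
  beta^-1 * (norm2 gx ^+ 2 * eta * eps_J + eps_g * norm2 gx)
  + eps_g * delta * (norm1 cx + eps_c)
  + pi * ((2 - tau) * eps_c
          + eps_J * (delta * (norm1 cx + eps_c)
                     + beta^-1 * (norm2 (projP Jx *m gx) + norm2 gx * eta * eps_J + eps_g))).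

Definition ell {m n : nat} (gx : 'cV[R]_n) (cx : 'cV[R]_m) (Jx : 'M[R]_(m, n))
  (pi : R) (d : 'cV[R]_n) : R :=
  dotv gx d + pi * norm1 (cx + Jx *m d) - pi * norm1 cx.

Definition qp_obj {n : nat} (beta : R) (gt d : 'cV[R]_n) : R :=
  2^-1 * beta * norm2 d ^+ 2 + dotv gt d.

Definition solves_qp {m n : nat} (beta : R) (gt : 'cV[R]_n) (ct : 'cV[R]_m)
  (Jt : 'M[R]_(m, n)) (d : 'cV[R]_n) : Prop :=
  ct + Jt *m d = 0 /\
  forall d' : 'cV[R]_n, ct + Jt *m d' = 0 -> qp_obj beta gt d <= qp_obj beta gt d'.

End Defs.

(* Main.v *)
Require Import Defs.
From HB Require Import structures.
From mathcomp Require Import all_boot all_order all_algebra.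
From mathcomp Require Import all_classical all_reals all_analysis.
From mathcomp Require Import ring lra.
Import Order.TTheory GRing.Theory Num.Theory.
Import numFieldNormedType.Exports.
Local Open Scope classical_set_scope.
Local Open Scope ring_scope.
Set Implicit Arguments.
Unset Strict Implicit.
Section L1.
Variable R : realType.
Implicit Types (n : nat).

Lemma dotvE {n} (u v : 'cV[R]_n) : dotv u v = \sum_i u i 0 * v i 0.
Proof. by rewrite /dotv mxE; apply: eq_bigr => i _; rewrite mxE. Qed.

Lemma dotvC {n} (u v : 'cV[R]_n) : dotv u v = dotv v u.
Proof. by rewrite !dotvE; apply: eq_bigr => i _; rewrite mulrC. Qed.

Lemma dotvDr {n} (u v w : 'cV[R]_n) : dotv u (v + w) = dotv u v + dotv u w.
Proof. by rewrite /dotv mulmxDr mxE. Qed.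

Lemma dotvDl {n} (u v w : 'cV[R]_n) : dotv (v + w) u = dotv v u + dotv w u.
Proof. by rewrite dotvC dotvDr !(dotvC u). Qed.

Lemma dotvZr {n} (a : R) (u v : 'cV[R]_n) : dotv u (a *: v) = a * dotv u v.
Proof. by rewrite /dotv -scalemxAr mxE. Qed.

Lemma dotvZl {n} (a : R) (u v : 'cV[R]_n) : dotv (a *: u) v = a * dotv u v.
Proof. by rewrite dotvC dotvZr dotvC. Qed.

Lemma dotvNr {n} (u v : 'cV[R]_n) : dotv u (- v) = - dotv u v.
Proof. by rewrite -scaleN1r dotvZr mulN1r. Qed.

Lemma dotvNl {n} (u v : 'cV[R]_n) : dotv (- u) v = - dotv u v.
Proof. by rewrite dotvC dotvNr dotvC. Qed.

Lemma dotvBr {n} (u v w : 'cV[R]_n) : dotv u (v - w) = dotv u v - dotv u w.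
Proof. by rewrite dotvDr dotvNr. Qed.

Lemma dotvBl {n} (u v w : 'cV[R]_n) : dotv (v - w) u = dotv v u - dotv w u.
Proof. by rewrite dotvDl dotvNl. Qed.

Lemma dotv0r {n} (u : 'cV[R]_n) : dotv u 0 = 0.
Proof. by rewrite /dotv mulmx0 mxE. Qed.

Lemma dotv0l {n} (u : 'cV[R]_n) : dotv 0 u = 0.
Proof. by rewrite dotvC dotv0r. Qed.

Lemma dotv_mx {m n} (A : 'M[R]_(m, n)) (u : 'cV[R]_m) (v : 'cV[R]_n) :
  dotv u (A *m v) = dotv (A^T *m u) v.
Proof. by rewrite /dotv trmx_mul trmxK mulmxA. Qed.

Lemma dotvv_ge0 {n} (v : 'cV[R]_n) : 0 <= dotv v v.
Proof. by rewrite dotvE; apply: sumr_ge0 => i _; rewrite -expr2 sqr_ge0. Qed.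

Lemma dotvv_eq0 {n} (v : 'cV[R]_n) : dotv v v = 0 -> v = 0.
Proof.
rewrite dotvE => /eqP; rewrite psumr_eq0 => [/allP H|i _]; last by rewrite -expr2 sqr_ge0.
apply/matrixP => i j; rewrite ord1 mxE.
have := H i (mem_index_enum _); rewrite /= -expr2 sqrf_eq0 => /eqP //.
Qed.

Lemma norm2_ge0 {n} (v : 'cV[R]_n) : 0 <= norm2 v.
Proof. exact: sqrtr_ge0. Qed.

Lemma norm2_sq {n} (v : 'cV[R]_n) : norm2 v ^+ 2 = dotv v v.
Proof.
rewrite /norm2 sqr_sqrtr; last by have := dotvv_ge0 v; rewrite dotvE.
by rewrite dotvE; apply: eq_bigr => i _; rewrite expr2.
Qed.

Lemma norm2_eq0 {n} (v : 'cV[R]_n) : norm2 v = 0 -> v = 0.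
Proof. by move=> h; apply: dotvv_eq0; rewrite -norm2_sq h expr2 mulr0. Qed.

Lemma norm2_0 n : norm2 (0 : 'cV[R]_n) = 0.
Proof.
have := norm2_sq (0 : 'cV[R]_n); rewrite dotv0r => /eqP; rewrite sqrf_eq0 => /eqP //.
Qed.

Lemma le_sq_norm2 (a b : R) : 0 <= b -> a ^+ 2 <= b ^+ 2 -> a <= b.
Proof. move=> hb h; nra. Qed.

Lemma CS {n} (u v : 'cV[R]_n) : dotv u v <= norm2 u * norm2 v.
Proof.
have [->|nv] := eqVneq v 0.
  by rewrite dotv0r norm2_0 mulr0.
have hv : 0 < dotv v v.
  rewrite lt_def dotvv_ge0 andbT; apply/eqP => /dotvv_eq0; exact/eqP.
set t := dotv u v / dotv v v.
have h := dotvv_ge0 (u - t *: v).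
rewrite !dotvBl !dotvBr !dotvZl !dotvZr (dotvC v u) in h.
have key : dotv u v ^+ 2 <= dotv u u * dotv v v.
  have e : dotv u u - t * dotv u v - (t * dotv u v - t * (t * dotv v v))
         = dotv u u - dotv u v ^+ 2 / dotv v v.
    rewrite /t; field; exact: lt0r_neq0.
  rewrite e subr_ge0 ler_pdivrMr // in h; exact: h.
have [hn|hp] := lerP (dotv u v) 0.
  by apply: (le_trans hn); apply: mulr_ge0; apply: norm2_ge0.
apply: le_sq_norm2; first by apply: mulr_ge0; apply: norm2_ge0.
by rewrite exprMn !norm2_sq.
Qed.

Lemma CSabs {n} (u v : 'cV[R]_n) : `|dotv u v| <= norm2 u * norm2 v.
Proof.
have [h|h] := lerP 0 (dotv u v); first by rewrite ger0_norm // CS.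
rewrite ltr0_norm // -dotvNl.
have -> : norm2 u = norm2 (- u) by rewrite /norm2; congr Num.sqrt; apply: eq_bigr => i _; rewrite mxE sqrrN.
exact: CS.
Qed.

Lemma norm2N {n} (v : 'cV[R]_n) : norm2 (- v) = norm2 v.
Proof. by rewrite /norm2; congr Num.sqrt; apply: eq_bigr => i _; rewrite mxE sqrrN. Qed.

Lemma norm2D {n} (u v : 'cV[R]_n) : norm2 (u + v) <= norm2 u + norm2 v.
Proof.
apply: le_sq_norm2; first by apply: addr_ge0; apply: norm2_ge0.
rewrite norm2_sq dotvDl !dotvDr (dotvC v u) sqrrD !norm2_sq.
have := CS u v; nra.
Qed.

Lemma norm2B {n} (u v : 'cV[R]_n) : norm2 (u - v) <= norm2 u + norm2 v.
Proof. by rewrite -(norm2N v); apply: norm2D. Qed.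

Lemma norm2Z {n} (a : R) (v : 'cV[R]_n) : norm2 (a *: v) = `|a| * norm2 v.
Proof.
apply/eqP; rewrite -(eqrXn2 (n:=2)) //; last by apply: mulr_ge0 => //; apply: norm2_ge0.
  by rewrite exprMn !norm2_sq dotvZl dotvZr real_normK ?num_real // mulrA expr2.
exact: norm2_ge0.
Qed.

Lemma norm2_le_sq {n} (u v : 'cV[R]_n) : dotv u u <= dotv v v -> norm2 u <= norm2 v.
Proof. by move=> h; apply: le_sq_norm2; rewrite ?norm2_ge0 // !norm2_sq. Qed.

Lemma abs_le_norm2 {n} (v : 'cV[R]_n) i : `|v i 0| <= norm2 v.
Proof.
apply: le_sq_norm2; first exact: norm2_ge0.
rewrite norm2_sq dotvE real_normK ?num_real //.
rewrite (bigD1 i) //= -expr2 lerDl; apply: sumr_ge0 => j _; rewrite -expr2 sqr_ge0 //.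
Qed.

Lemma norm1_ge0 {n} (v : 'cV[R]_n) : 0 <= norm1 v.
Proof. by apply: sumr_ge0. Qed.

Lemma norm2_le_norm1 {n} (v : 'cV[R]_n) : norm2 v <= norm1 v.
Proof.
apply: le_sq_norm2; first exact: norm1_ge0.
rewrite norm2_sq dotvE /norm1.
have : \sum_i v i 0 * v i 0 <= (\sum_i `|v i 0|) ^+ 2 /\ 0 <= \sum_i `|v i 0|.
  elim/big_ind2: _ => //.
  - move=> ? ? ? ? [? ?] [? ?]; split; nra.
  - move=> i _; split; last by [].
    by rewrite real_normK ?num_real // expr2.
by case.
Qed.

End L1.
Section L2.
Variable R : realType.

Lemma norm1D {n} (u v : 'cV[R]_n) : norm1 (u + v) <= norm1 u + norm1 v.
Proof.
rewrite /norm1 -big_split /=; apply: ler_sum => i _; rewrite mxE; exact: ler_normD.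
Qed.

Lemma norm1N {n} (u : 'cV[R]_n) : norm1 (- u) = norm1 u.
Proof. by apply: eq_bigr => i _; rewrite mxE normrN. Qed.

Lemma norm1B {n} (u v : 'cV[R]_n) : norm1 (u - v) = norm1 (v - u).
Proof. by rewrite -norm1N opprB. Qed.

Lemma normInf_ge {n} (w : 'cV[R]_n) i : `|w i 0| <= normInf w.
Proof. exact: (le_bigmax (0 : R) (fun i => `|w i 0|) i). Qed.

Lemma dot_inf1 {n} (w c : 'cV[R]_n) : `|dotv w c| <= normInf w * norm1 c.
Proof.
rewrite dotvE /norm1 mulr_sumr; apply: (le_trans (ler_norm_sum _ _ _)).
apply: ler_sum => i _; rewrite normrM; apply: ler_wpM2r => //; exact: normInf_ge.
Qed.

Lemma opnorm12_bound {m n} (A : 'M[R]_(m, n)) (x : 'cV[R]_n) :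
  norm1 (A *m x) <= opnorm12 A * norm2 x.
Proof.
have [->|nx] := eqVneq x 0.
  by rewrite mulmx0 norm2_0 mulr0 /norm1 big1 // => i _; rewrite mxE normr0.
have hx : 0 < norm2 x.
  rewrite lt_def norm2_ge0 andbT; apply/eqP => /norm2_eq0; exact/eqP.
set B := \sum_i \sum_j `|A i j|.
have hB : forall y : 'cV[R]_n, norm1 (A *m y) <= B * norm2 y.
  move=> y; rewrite /norm1 /B mulr_suml; apply: ler_sum => i _.
  rewrite mxE mulr_suml; apply: (le_trans (ler_norm_sum _ _ _)).
  apply: ler_sum => j _; rewrite normrM; apply: ler_wpM2l => //; exact: abs_le_norm2.
have hub : has_ubound [set norm1 (A *m y) / norm2 y | y in [set y : 'cV[R]_n | y != 0]].
  exists B => _ [y /= ny <-].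
  have hy : 0 < norm2 y.
    rewrite lt_def norm2_ge0 andbT; apply/eqP => /norm2_eq0; exact/eqP.
  by rewrite ler_pdivrMr.
have := ub_le_sup hub (ex_intro2 _ _ x nx erefl).
by rewrite ler_pdivrMr.
Qed.

Lemma sigma_min_bound {m n} (A : 'M[R]_(m, n)) (y : 'cV[R]_m) :
  sigma_min A * norm2 y <= norm2 (A^T *m y).
Proof.
have [->|ny] := eqVneq y 0.
  by rewrite norm2_0 mulr0 norm2_ge0.
have hy : 0 < norm2 y.
  rewrite lt_def norm2_ge0 andbT; apply/eqP => /norm2_eq0; exact/eqP.
have hlb : has_lbound [set norm2 (A^T *m z) | z in [set z : 'cV[R]_m | norm2 z = 1]].
  by exists 0 => _ [z _ <-]; exact: norm2_ge0.
have h1 : norm2 ((norm2 y)^-1 *: y) = 1.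
  by rewrite norm2Z ger0_norm ?invr_ge0 ?norm2_ge0 // mulVf // gt_eqF.
have := ge_inf hlb (ex_intro2 _ _ _ h1 erefl).
rewrite -scalemxAr norm2Z ger0_norm ?invr_ge0 ?norm2_ge0 // -ler_pdivlMr //.
by rewrite mulrC.
Qed.

End L2.
Section L3.
Variable R : realType.

Lemma unit_of_inj {m} (M : 'M[R]_m) : (forall w : 'cV[R]_m, M *m w = 0 -> w = 0) -> M \in unitmx.
Proof.
move=> h; rewrite unitmxE unitfE -det_tr; apply/negP => /det0P [v nv hv].
have : M *m v^T = 0 by rewrite -[M]trmxK -trmx_mul hv trmx0.
move/h => /(congr1 trmx); rewrite trmxK trmx0 => e; by move: nv; rewrite e eqxx.
Qed.

Variables (m n : nat) (A : 'M[R]_(m, n)).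
Hypothesis hA : A *m A^T \in unitmx.

Lemma projP_sym : (projP A)^T = projP A.
Proof.
rewrite /projP linearB /= trmx1 !trmx_mul trmxK trmx_inv trmx_mul trmxK mulmxA //.
Qed.

Lemma projP_A : A *m projP A = 0.
Proof.
by rewrite /projP mulmxBr mulmx1 !mulmxA mulmxV // mul1mx subrr.
Qed.

Lemma projP_At : projP A *m A^T = 0.
Proof.
by rewrite /projP mulmxBl mul1mx -!mulmxA mulVmx // mulmx1 subrr.
Qed.

Lemma projP_idem : projP A *m projP A = projP A.
Proof.
rewrite {2}/projP mulmxBr mulmx1 !mulmxA projP_At !mul0mx subr0 //.
Qed.

Lemma projP_compl (z : 'cV[R]_n) : z - projP A *m z = A^T *m (invmx (A *m A^T) *m (A *m z)).
Proof. by rewrite /projP mulmxBl mul1mx opprB addrC subrK !mulmxA. Qed.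

Lemma dot_projP (u v : 'cV[R]_n) : dotv (projP A *m u) v = dotv u (projP A *m v).
Proof. by rewrite dotv_mx projP_sym. Qed.

Lemma dot_projP_compl (u v : 'cV[R]_n) : dotv (projP A *m u) (v - projP A *m v) = 0.
Proof. by rewrite dot_projP mulmxBr mulmxA projP_idem subrr dotv0r. Qed.

Lemma projP_pyth (z : 'cV[R]_n) :
  norm2 z ^+ 2 = norm2 (projP A *m z) ^+ 2 + norm2 (z - projP A *m z) ^+ 2.
Proof.
rewrite !norm2_sq.
have hpw := dot_projP_compl z z.
set p := projP A *m z in hpw *; set w := z - p in hpw *.
have -> : dotv z z = dotv (p + w) (p + w) by rewrite /w addrC subrK.
clearbody w p.
rewrite dotvDl !dotvDr hpw (dotvC w p) hpw; lra.
Qed.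

Lemma projP_contr (z : 'cV[R]_n) : norm2 (projP A *m z) <= norm2 z.
Proof.
apply: le_sq_norm2; first exact: norm2_ge0.
rewrite (projP_pyth z) lerDl; exact: sqr_ge0.
Qed.

Lemma projP_compl_contr (z : 'cV[R]_n) : norm2 (z - projP A *m z) <= norm2 z.
Proof.
apply: le_sq_norm2; first exact: norm2_ge0.
rewrite (projP_pyth z) lerDr; exact: sqr_ge0.
Qed.

Lemma projP_fix (z : 'cV[R]_n) : A *m z = 0 -> projP A *m z = z.
Proof. by move=> h; apply/eqP; rewrite -subr_eq0 -opprB oppr_eq0 projP_compl h !mulmx0. Qed.

Lemma projP_Atw (w : 'cV[R]_m) : projP A *m (A^T *m w) = 0.
Proof. by rewrite mulmxA projP_At mul0mx. Qed.

End L3.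
Section L4.
Variable R : realType.

Lemma pos_norm2 {n} (v : 'cV[R]_n) : v != 0 -> 0 < norm2 v.
Proof. move=> nv; rewrite lt_def norm2_ge0 andbT; apply/eqP => /norm2_eq0; exact/eqP. Qed.

Lemma gram_unit {m n} (B : 'M[R]_(m, n)) (a : R) : 0 < a ->
  (forall y, a * norm2 y <= norm2 (B^T *m y)) -> B *m B^T \in unitmx.
Proof.
move=> ha h; apply: unit_of_inj => w hw.
have h0 : dotv (B^T *m w) (B^T *m w) = 0.
  by rewrite -dotv_mx mulmxA hw dotv0r.
have := h w; rewrite (dotvv_eq0 h0) norm2_0 => h1.
apply: norm2_eq0; have := norm2_ge0 w; nra.
Qed.

Lemma sq_le (a b : R) : 0 <= a -> a <= b -> a ^+ 2 <= b ^+ 2.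
Proof. move=> ha hab; nra. Qed.

Lemma pyth_orth {n} (u v : 'cV[R]_n) : dotv u v = 0 ->
  norm2 (u - v) ^+ 2 = norm2 u ^+ 2 + norm2 v ^+ 2.
Proof.
move=> h; rewrite !norm2_sq dotvBl !dotvBr h (dotvC v u) h; lra.
Qed.

Variables (m n : nat) (J Jt : 'M[R]_(m, n)) (gam eJ : R).
Hypothesis hJ : forall y, gam * norm2 y <= norm2 (J^T *m y).
Hypothesis hE : forall x, norm1 ((Jt - J) *m x) <= eJ * norm2 x.
Hypothesis heJ : 0 <= eJ.
Hypothesis hg : eJ < gam.

Lemma gam_pos : 0 < gam. Proof. exact: le_lt_trans hg. Qed.

Lemma tr_bound y : norm2 ((Jt - J)^T *m y) <= eJ * norm2 y.
Proof.
set z := (Jt - J)^T *m y.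
have h1 : norm2 z ^+ 2 <= norm2 y * (eJ * norm2 z).
  rewrite norm2_sq {1}/z -dotv_mx.
  apply: (le_trans (CS _ _)); apply: ler_wpM2l; first exact: norm2_ge0.
  exact: (le_trans (norm2_le_norm1 _)).
have hz := norm2_ge0 z; have hy := norm2_ge0 y.
have [hz0|hz0] := eqVneq (norm2 z) 0; first by rewrite hz0; apply: mulr_ge0.
have hzp : 0 < norm2 z by rewrite lt_def hz0 hz.
rewrite expr2 in h1.
have : norm2 z * norm2 z <= (eJ * norm2 y) * norm2 z by lra.
by rewrite ler_pM2r.
Qed.

Lemma Jt_bound y : (gam - eJ) * norm2 y <= norm2 (Jt^T *m y).
Proof.
have e : J^T *m y = Jt^T *m y - (Jt - J)^T *m y.
  by rewrite linearB /= mulmxBl opprB addrC subrK.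
have := hJ y; rewrite e => h.
have := le_trans h (norm2B _ _); have := tr_bound y; lra.
Qed.

Local Notation P := (projP J).
Local Notation Pt := (projP Jt).
Local Notation e := (eJ / gam).

Lemma e_ge0 : 0 <= e. Proof. by rewrite divr_ge0 // ltW // gam_pos. Qed.
Lemma e_lt1 : e < 1. Proof. by rewrite ltr_pdivrMr ?gam_pos // mul1r. Qed.

Lemma M_unit : J *m J^T \in unitmx.
Proof. exact: (gram_unit gam_pos hJ). Qed.

Lemma Mt_unit : Jt *m Jt^T \in unitmx.
Proof. apply: (gram_unit _ Jt_bound); by rewrite subr_gt0. Qed.

Lemma F8 w : norm2 (Pt *m (J^T *m w)) <= e * norm2 (J^T *m w).
Proof.
have e1 : Pt *m (J^T *m w) = Pt *m ((J - Jt)^T *m w).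
  by rewrite [(J - Jt)^T]linearB /= (mulmxBl (J^T) (Jt^T) w) (mulmxBr Pt) (projP_Atw Mt_unit) subr0.
rewrite e1; apply: (le_trans (projP_contr Mt_unit _)).
have e2 : (J - Jt)^T *m w = - ((Jt - J)^T *m w) by rewrite -mulNmx -linearN /= opprB.
rewrite e2 norm2N; apply: (le_trans (tr_bound w)).
apply: (le_trans (y := e * (gam * norm2 w))).
  by rewrite mulrA divfK ?gt_eqF ?gam_pos.
apply: ler_wpM2l; [exact: e_ge0 | exact: hJ].
Qed.

Lemma F8' z : norm2 (Pt *m (z - P *m z)) <= e * norm2 (z - P *m z).
Proof. by rewrite projP_compl ?M_unit //; apply: F8. Qed.


Lemma K_unit : Jt *m J^T \in unitmx.
Proof.
apply: unit_of_inj => w hw.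
set z := J^T *m w.
have hz : Jt *m z = 0 by rewrite /z mulmxA.
have hPz : Pt *m z = z by apply: projP_fix.
have h := F8 w; rewrite -/z hPz in h.
have hz0 : norm2 z = 0.
  have := norm2_ge0 z; have := e_lt1; have := e_ge0; nra.
have := hJ w; rewrite -/z hz0 => h1.
apply: norm2_eq0; have := norm2_ge0 w; have := gam_pos; nra.
Qed.

Lemma F9 x : J *m x = 0 -> norm2 (x - Pt *m x) <= e * norm2 x.
Proof.
move=> hx.
set K := Jt *m J^T.
set y := x - J^T *m (invmx K *m (Jt *m x)).
have hJty : Jt *m y = 0.
  by rewrite /y mulmxBr !mulmxA -/K mulmxV ?K_unit // mul1mx subrr.
have hPy : P *m y = x.
  by rewrite /y mulmxBr (projP_Atw M_unit) subr0 projP_fix.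
have hPty : Pt *m y = y by apply: projP_fix.
set X := norm2 x; set Y := norm2 y; set p := norm2 (Pt *m x).
set q := norm2 (x - Pt *m x); set r := norm2 (y - P *m y).
have hX := norm2_ge0 x; have hY := norm2_ge0 y; have hp := norm2_ge0 (Pt *m x).
have hq := norm2_ge0 (x - Pt *m x); have hr := norm2_ge0 (y - P *m y).
have he0 := e_ge0; have he1 := e_lt1.
have hr2 : r ^+ 2 <= r * (e * Y).
  rewrite /r norm2_sq.
  have -> : dotv (y - P *m y) (y - P *m y) = dotv (y - P *m y) y.
    by rewrite [in LHS]dotvBr (dotvC (y - P *m y) (P *m y)) (dot_projP_compl M_unit) subr0.
  have -> : dotv (y - P *m y) y = dotv (y - P *m y) (Pt *m y) by rewrite hPty.
  rewrite -dot_projP.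
  apply: (le_trans (CS _ _)); rewrite -/Y -/r mulrA; apply: ler_wpM2r => //.
  rewrite mulrC; exact: F8'.
have hrY : r <= e * Y.
  have [hr0|hr0] := eqVneq r 0; first by rewrite hr0; apply: mulr_ge0.
  have hrp : 0 < r by rewrite lt_def hr0 hr.
  rewrite expr2 in hr2; by rewrite -(ler_pM2l hrp).
have hY2 : Y ^+ 2 = X ^+ 2 + r ^+ 2 by rewrite /Y /X /r (projP_pyth M_unit y) hPy.
have hX2 : X ^+ 2 = p ^+ 2 + q ^+ 2 by rewrite /X (projP_pyth Mt_unit x).
have hXp : X ^+ 2 <= p * Y.
  have -> : X ^+ 2 = dotv x y.
    rewrite /X norm2_sq.
    have -> : dotv x x = dotv (P *m y) (P *m y) by rewrite hPy.
    have -> : dotv x y = dotv (P *m y) y by rewrite hPy.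
    by rewrite dot_projP mulmxA (projP_idem M_unit) dotvC.
  rewrite -hPty -dot_projP; exact: CS.
have h1 : Y ^+ 2 * (1 - e ^+ 2) <= X ^+ 2.
  have : r ^+ 2 <= e ^+ 2 * Y ^+ 2.
    rewrite -exprMn; exact: sq_le.
  nra.
have h2 : X ^+ 2 * X ^+ 2 * (1 - e ^+ 2) <= p ^+ 2 * X ^+ 2.
  have h3 : X ^+ 2 * X ^+ 2 <= p ^+ 2 * Y ^+ 2.
    rewrite -!exprMn; apply: sq_le => //; exact: sqr_ge0.
  have h4 : 0 <= 1 - e ^+ 2 by nra.
  have h5 : 0 <= p ^+ 2 := sqr_ge0 p.
  nra.
have hq2 : q ^+ 2 <= (e * X) ^+ 2.
  have [hX0|hX0] := eqVneq X 0.
    have : q ^+ 2 <= 0 by rewrite hX0 expr2 mulr0 in hX2; have := sqr_ge0 p; lra.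
    by move=> h; apply: (le_trans h); apply: sqr_ge0.
  have hXp0 : 0 < X ^+ 2 by rewrite exprn_gt0 // lt_def hX0 hX.
  have : X ^+ 2 * (1 - e ^+ 2) <= p ^+ 2.
    by rewrite -(ler_pM2r hXp0) mulrAC.
  rewrite exprMn; nra.
apply: le_sq_norm2; first by apply: mulr_ge0.
exact: hq2.
Qed.

Lemma F10 g : norm2 (P *m g - Pt *m g) <= e * norm2 g.
Proof.
set a := P *m g; set b := g - a.
have hg' : g = a + b by rewrite /b addrC subrK.
have ha : J *m a = 0 by rewrite /a mulmxA (projP_A M_unit) mul0mx.
have e1 : a - Pt *m g = (a - Pt *m a) - Pt *m b.
  by rewrite {1}hg' mulmxDr opprD addrA.
have horth : dotv (a - Pt *m a) (Pt *m b) = 0.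
  by rewrite dotvC (dot_projP_compl Mt_unit).
have hA := F9 ha.
have hB : norm2 (Pt *m b) <= e * norm2 b by exact: F8'.
have hpy : norm2 g ^+ 2 = norm2 a ^+ 2 + norm2 b ^+ 2 by rewrite (projP_pyth M_unit g).
rewrite e1; apply: le_sq_norm2; first by apply: mulr_ge0; [exact: e_ge0|exact: norm2_ge0].
have -> : norm2 (a - Pt *m a - Pt *m b) ^+ 2 = norm2 (a - Pt *m a) ^+ 2 + norm2 (Pt *m b) ^+ 2.
  exact: pyth_orth.
rewrite exprMn hpy mulrDr.
apply: lerD; rewrite -exprMn; apply: sq_le => //; exact: norm2_ge0.
Qed.

End L4.
Section L5.
Variable R : realType.

Lemma qp_sol {m n} (beta : R) (gt : 'cV[R]_n) (ct : 'cV[R]_m) (Jt : 'M[R]_(m, n)) d :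
  0 < beta -> Jt *m Jt^T \in unitmx -> solves_qp beta gt ct Jt d ->
  d = - (beta^-1 *: (projP Jt *m gt)) - Jt^T *m (invmx (Jt *m Jt^T) *m ct).
Proof.
move=> hb hM [hfeas hopt].
set u := - (beta^-1 *: (projP Jt *m gt)).
set v := Jt^T *m (invmx (Jt *m Jt^T) *m ct).
have hJu : Jt *m u = 0 by rewrite /u mulmxN -scalemxAr mulmxA (projP_A hM) mul0mx scaler0 oppr0.
have hJv : Jt *m v = ct by rewrite /v !mulmxA mulmxV // mul1mx.
have hfs : ct + Jt *m (u - v) = 0 by rewrite mulmxBr hJu hJv sub0r subrr.
have hopt' := hopt _ hfs.
set w := d - (u - v).
have hJd : Jt *m d = - ct by apply/eqP; rewrite -addr_eq0 addrC hfeas.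
have hJw : Jt *m w = 0 by rewrite /w mulmxBr hJd mulmxBr hJu hJv sub0r subrr.
have hkey : beta * dotv (u - v) w + dotv gt w = 0.
  have e1 : beta *: (u - v) + gt = Jt^T *m (invmx (Jt *m Jt^T) *m (Jt *m gt) - beta *: (invmx (Jt *m Jt^T) *m ct)).
    rewrite /u /v scalerBr scalerN scalerA mulfV ?gt_eqF // scale1r.
    rewrite mulmxBr -scalemxAr -projP_compl; rewrite addrC addrA addrAC; congr (_ - _); by rewrite addrC.
  have : dotv (beta *: (u - v) + gt) w = 0 by rewrite e1 -dotv_mx hJw dotv0r.
  by rewrite dotvDl dotvZl.
have hd : d = (u - v) + w by rewrite /w addrC subrK.
clearbody w; move: hopt' hkey; rewrite hd; clearbody u v; clear hd hfs.
set s := u - v; clearbody s => hopt' hkey.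
rewrite /qp_obj !norm2_sq dotvDl !dotvDr (dotvC w s) in hopt'.
have hw : dotv w w <= 0.
  have hb2 : 0 < 2^-1 * beta by rewrite mulr_gt0 // invr_gt0.
  nra.
have hw0 : dotv w w = 0 by apply/eqP; rewrite eq_le hw dotvv_ge0.
by rewrite (dotvv_eq0 hw0) addr0.
Qed.
End L5.
Unset Implicit Arguments.
Set Strict Implicit.

Theorem corollary3p1 (R : realType) (m n : nat) (hmn : (m < n)%N)
  (f : 'cV[R]_n -> R) (c : 'cV[R]_n -> 'cV[R]_m)
  (g : 'cV[R]_n -> 'cV[R]_n) (J : 'cV[R]_n -> 'M[R]_(m, n))
  (hf : forall x, differentiable f x /\ forall v, 'd f x v = dotv (g x) v)
  (hc : forall x, differentiable c x /\ forall v, 'd c x v = J x *m v)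
  (hg_cont : continuous g) (hJ_cont : continuous J)
  (ft : 'cV[R]_n -> R) (ct : 'cV[R]_n -> 'cV[R]_m)
  (gt : 'cV[R]_n -> 'cV[R]_n) (Jt : 'cV[R]_n -> 'M[R]_(m, n))
  (eps_f eps_c eps_g eps_J : R)
  (hft : forall x, `|ft x - f x| <= eps_f)
  (hct : forall x, norm1 (ct x - c x) <= eps_c)
  (hgt : forall x, norm2 (gt x - g x) <= eps_g)
  (hJt : forall x, opnorm12 (Jt x - J x) <= eps_J)
  (x : nat -> 'cV[R]_n) (gamma : R) (hgamma : eps_J < gamma)
  (hsig : forall k, gamma <= sigma_min (J (x k)))
  (beta pi : nat -> R) (d : nat -> 'cV[R]_n) (tau : R)
  (hbeta : forall k, 0 < beta k)
  (hd : forall k, solves_qp (beta k) (gt (x k)) (ct (x k)) (Jt (x k)) (d k))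
  (htau : 0 < tau < 1)
  (hpi0 : forall k, 0 < pi k)
  (hpi : forall k, (1 - tau)^-1 *
          normInf (invmx (Jt (x k) *m (Jt (x k))^T) *m Jt (x k) *m gt (x k)) <= pi k)
  (theta1 : R) (htheta : 0 <= theta1 < 1) (k : nat) :
  let delta := (gamma - eps_J)^-1 in
  let eta := gamma^-1 in
  let gk := g (x k) in let ck := c (x k) in let Jk := J (x k) in
  let Psi := (beta k)^-1 * dotv gk (projP Jk *m gk) + tau * pi k * norm1 ck in
  (1 - theta1) * Psi >= Eterm eps_c eps_g eps_J delta eta tau gk ck Jk (beta k) (pi k) ->
  ell gk ck Jk (pi k) (d k) <= - theta1 * Psi.
Proof.
move=> delta eta gk ck Jk Psi hEt.
have hJ : forall y, gamma * norm2 y <= norm2 (Jk^T *m y).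
  move=> y; apply: le_trans (sigma_min_bound _ _).
  by apply: ler_wpM2r; [exact: norm2_ge0 | exact: hsig].
set Jtk := Jt (x k); set gtk := gt (x k); set ctk := ct (x k).
have hE : forall z, norm1 ((Jtk - Jk) *m z) <= eps_J * norm2 z.
  move=> z; apply: le_trans (opnorm12_bound _ _) _.
  by apply: ler_wpM2r; [exact: norm2_ge0 | exact: hJt].
have heJ : 0 <= eps_J.
  set z : 'cV[R]_n := const_mx 1.
  have nz : z != 0.
    apply/negP => /eqP /matrixP /(_ (Ordinal hmn) 0); rewrite !mxE => /eqP.
    by rewrite oner_eq0.
  have hz := pos_norm2 nz.
  have := hE z; have := norm1_ge0 ((Jtk - Jk) *m z); nra.
have hb := hbeta k; have hp := hpi0 k.
have heg : 0 <= eps_g by apply: le_trans (hgt (x k)); exact: norm2_ge0.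
have hec : 0 <= eps_c by apply: le_trans (hct (x k)); exact: norm1_ge0.
have hgam : 0 < gamma by apply: le_lt_trans hgamma.
have hMt := Mt_unit hJ hE heJ hgamma.
have hM := M_unit hJ heJ hgamma.
have hdk := qp_sol hb hMt (hd k).

set P := projP Jk; set Pt := projP Jtk.
set Mi := invmx (Jtk *m Jtk^T).
set u := - ((beta k)^-1 *: (Pt *m gtk)).
set v := Jtk^T *m (Mi *m ctk).
have hfeas : ctk + Jtk *m d k = 0 by case: (hd k).
set dk := d k in hdk hfeas *.
set G := norm2 gk; set Cn := norm1 ck; set Ct := norm1 ctk; set PG := norm2 (P *m gk).
set gPg := dotv gk (P *m gk); set A1 := dotv gk (Pt *m gtk); set V := norm2 v.
set U := norm2 (Pt *m gtk); set D := norm2 dk; set W := dotv gtk v; set Z := dotv (gtk - gk) v.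
set N := norm1 (ck + Jk *m dk).
have hdk' : dk = u - v by rewrite hdk.
have hG := norm2_ge0 gk; have hCn := norm1_ge0 ck; have hV := norm2_ge0 v.
have hU := norm2_ge0 (Pt *m gtk); have hD := norm2_ge0 dk; have hPG := norm2_ge0 (P *m gk).
have hdel : 0 < delta by rewrite invr_gt0 subr_gt0.
have heta : 0 < eta by rewrite invr_gt0.
have he : eps_J / gamma = eta * eps_J by rewrite mulrC.
have hgg : norm2 (gtk - gk) <= eps_g := hgt (x k).
have hA1 : gPg - eta * eps_J * G ^+ 2 - eps_g * G <= A1.
  have e1 : A1 = gPg - dotv gk (P *m gk - Pt *m gk) + dotv (Pt *m gk) (gtk - gk).
    rewrite /A1 /gPg.
    have -> : Pt *m gtk = Pt *m gk + Pt *m (gtk - gk) by rewrite -mulmxDr addrC subrK.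
    rewrite (dotvDr gk) (dotvBr gk (P *m gk)) -(dot_projP Jtk gk (gtk - gk)); lra.
  have h1 : dotv gk (P *m gk - Pt *m gk) <= G * (eta * eps_J * G).
    apply: le_trans (CS _ _) _; apply: ler_wpM2l => //.
    by apply: le_trans (F10 hJ hE heJ hgamma gk) _; rewrite he.
  have h2 : - (G * eps_g) <= dotv (Pt *m gk) (gtk - gk).
    have hcs := CSabs (Pt *m gk) (gtk - gk).
    have hpc : norm2 (Pt *m gk) * norm2 (gtk - gk) <= G * eps_g.
      apply: ler_pM => //; [exact: norm2_ge0 | exact: norm2_ge0 | exact: projP_contr].
    by move: (le_trans hcs hpc); rewrite ler_norml => /andP [].
  rewrite e1 expr2; lra.
have hW : - W <= (1 - tau) * pi k * Ct.
  have eW : W = dotv (Mi *m Jtk *m gtk) ctk.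
    rewrite /W /v dotv_mx trmxK dotv_mx /Mi trmx_inv trmx_mul trmxK mulmxA //.
  have hnI : normInf (Mi *m Jtk *m gtk) <= (1 - tau) * pi k.
    have := hpi k; rewrite -/Jtk -/gtk -/Mi mulrC ler_pdivrMr; last first.
      by case/andP: htau => _ h; rewrite subr_gt0.
    by rewrite mulrC.
  rewrite eW.
  have h := le_trans (dot_inf1 (Mi *m Jtk *m gtk) ctk) (ler_wpM2r (norm1_ge0 ctk) hnI).
  move: h; rewrite ler_norml => /andP [h _]; rewrite -/Ct in h; lra.
have hZ : Z <= eps_g * V.
  apply: le_trans (ler_norm _) _; apply: le_trans (CSabs _ _) _.
  by apply: ler_wpM2r.
have hVb : V <= delta * Ct.
  set w := Mi *m ctk.
  have hw : (gamma - eps_J) * norm2 w <= V := Jt_bound hJ hE heJ w.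
  have hw' : norm2 w <= delta * V.
    by rewrite /delta mulrC ler_pdivlMr ?subr_gt0 // mulrC.
  have hV2 : V ^+ 2 <= norm2 w * norm2 ctk.
    rewrite /V norm2_sq {1}/v -dotv_mx /v mulmxA mulmxA /Mi mulmxV // mul1mx.
    exact: CS.
  have hc2 : norm2 ctk <= Ct := norm2_le_norm1 ctk.
  have hc0 := norm2_ge0 ctk; have hw0 := norm2_ge0 w.
  have [hV0|hV0] := eqVneq V 0; first by rewrite hV0; apply: mulr_ge0; [exact: ltW|exact: norm1_ge0].
  have hVp : 0 < V by rewrite lt_def hV0 hV.
  have : V * V <= V * (delta * norm2 ctk).
    rewrite -expr2; apply: le_trans hV2 _; rewrite mulrA (mulrC V); apply: ler_wpM2r => //.
  rewrite (ler_pM2l hVp) => h; apply: le_trans h _; apply: ler_wpM2l => //; exact: ltW.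
have hCt : Ct <= Cn + eps_c.
  have := norm1D ck (ctk - ck); rewrite addrC subrK -/Ct -/Cn.
  have := hct (x k); rewrite -/ctk -/ck; lra.
have hN : N <= eps_c + eps_J * D.
  have eq : ck + Jk *m dk = (ck - ctk) + (Jk - Jtk) *m dk.
    by rewrite mulmxBl addrACA -opprD hfeas subr0.
  rewrite /N eq; apply: le_trans (norm1D _ _) _; apply: lerD.
    by rewrite norm1B; exact: hct.
  by rewrite -opprB mulNmx norm1N; exact: hE.
have hDb : D <= (beta k)^-1 * U + V.
  rewrite /D hdk'; apply: le_trans (norm2B _ _) _; apply: lerD => //.
  by rewrite norm2N norm2Z ger0_norm // invr_ge0 ltW.
have hUb : U <= PG + eta * eps_J * G + eps_g.
  rewrite /U; have -> : Pt *m gtk = (P *m gk - (P *m gk - Pt *m gk)) + Pt *m (gtk - gk).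
    by rewrite opprB addrCA subrr addr0 -mulmxDr addrC subrK.
  apply: le_trans (norm2D _ _) _; apply: lerD.
    apply: le_trans (norm2B _ _) _; apply: lerD => //.
    by apply: le_trans (F10 hJ hE heJ hgamma gk) _; rewrite he.
  apply: le_trans (projP_contr hMt _) _; exact: hgg.
have hell : ell gk ck Jk (pi k) dk = - (beta k)^-1 * A1 - W + Z + pi k * N - pi k * Cn.
  rewrite /ell -/N -/Cn hdk' dotvBr /u dotvNr dotvZr -/A1.
  have : Z = W - dotv gk v by rewrite /Z dotvBl dotvC (dotvC v).
  lra.
rewrite hell.
have hPsi : Psi = (beta k)^-1 * gPg + tau * pi k * Cn by [].
rewrite /Eterm -/G -/Cn -/PG in hEt.
have hbi : 0 < (beta k)^-1 by rewrite invr_gt0.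
have ht1 : 0 < 1 - tau by case/andP: htau => _ h; rewrite subr_gt0.
have s1 : - (beta k)^-1 * A1 <= - (beta k)^-1 * gPg + (beta k)^-1 * (G ^+ 2 * eta * eps_J + eps_g * G).
  have := ler_wpM2l (ltW hbi) hA1; lra.
have s2 : (1 - tau) * pi k * Ct <= (1 - tau) * pi k * (Cn + eps_c).
  by apply: ler_wpM2l => //; apply: mulr_ge0; apply: ltW.
have s3 : eps_g * V <= eps_g * delta * (Cn + eps_c).
  rewrite -mulrA; apply: ler_wpM2l => //; apply: le_trans hVb _; apply: ler_wpM2l => //; exact: ltW.
have s5 : D <= delta * (Cn + eps_c) + (beta k)^-1 * (PG + G * eta * eps_J + eps_g).
  apply: le_trans hDb _; rewrite addrC; apply: lerD.
    by apply: le_trans hVb _; apply: ler_wpM2l => //; exact: ltW.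
  apply: ler_wpM2l; first exact: ltW.
  lra.
have s4 : pi k * N <= pi k * ((2 - tau) * eps_c - (1 - tau) * eps_c
     + eps_J * (delta * (Cn + eps_c) + (beta k)^-1 * (PG + G * eta * eps_J + eps_g))).
  apply: ler_wpM2l; first exact: ltW.
  apply: le_trans hN _.
  have -> : (2 - tau) * eps_c - (1 - tau) * eps_c = eps_c by ring.
  by apply: lerD => //; apply: ler_wpM2l.
have : - (beta k)^-1 * A1 - W + Z + pi k * N - pi k * Cn <= - Psi +
  Eterm eps_c eps_g eps_J delta eta tau gk ck Jk (beta k) (pi k).
  rewrite hPsi /Eterm -/G -/Cn -/PG.
  lra.
move: hEt; rewrite hPsi; lra.
Qed.
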